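(* Let $\alpha,\beta,\gamma,\Delta\in\mathbb{C}$ with $(\Delta,\beta)\neq(0,0)$. Consider extensions of conformal $\mathrm{HV}$-modules $$0\to\mathbb{C}c_\gamma\to E\to V(\alpha,\beta,\Delta)\to0,$$ realized as $E=\mathbb{C}c_\gamma\oplus\mathbb{C}[\partial]v_\Delta$ with $\mathbb{C}c_\gamma$ a submodule and $L_\lambda v_\Delta=(\partial+\alpha+\Delta\lambda)v_\Delta+f(\lambda)c_\gamma$, $N_\lambda v_\Delta=\beta v_\Delta+k(\lambda)c_\gamma$, $f,k\in\mathbb{C}[\lambda]$. Nontrivial extensions of this form exist if and only if $\alpha+\gamma=0$, $\beta=0$ and $\Delta\in\{1,2\}$. They are given, up to equivalence, by: (i) $k(\lambda)=k_1\lambda$, $f(\lambda)=f_2\lambda^2$, for $\Delta=1$ and $(k_1,f_2)\neq(0,0)$; (ii) $k=0$, $f(\lambda)=f_3\lambda^3$, for $\Delta=2$ and $f_3\neq0$. Furthermore, the trivial cocycles are exactly the pairs $(f,k)=(a(\alpha+\gamma+\Delta\lambda),a\beta)$, $a\in\mathbb{C}$.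
   Context: A conformal module over a Lie conformal algebra $R$ is a $\mathbb{C}[\partial]$-module $V$ with $a\mapsto a_\lambda\in\mathrm{End}_{\mathbb{C}}(V)\otimes\mathbb{C}[\lambda]$ satisfying $[a_\lambda,b_\mu]=[a_\lambda b]_{\lambda+\mu}$ and $(\partial a)_\lambda=[\partial,a_\lambda]=-\lambda a_\lambda$. The Heisenberg–Virasoro conformal algebra $\mathrm{HV}$ is the free $\mathbb{C}[\partial]$-module with basis $L,N$ and $\lambda$-brackets $[L_\lambda L]=(\partial+2\lambda)L$, $[L_\lambda N]=(\partial+\lambda)N$, $[N_\lambda L]=\lambda N$, $[N_\lambda N]=0$. $V(\alpha,\beta,\Delta)=\mathbb{C}[\partial]v_\Delta$ with $L_\lambda v_\Delta=(\partial+\alpha+\Delta\lambda)v_\Delta$, $N_\lambda v_\Delta=\beta v_\Delta$. $\mathbb{C}c_\gamma$ is the one-dimensional module with $\partial c_\gamma=\gamma c_\gamma$ and $L_\lambda c_\gamma=N_\lambda c_\gamma=0$. An extension of $W$ by $V$ is an exact sequence $0\to V\to E\to W\to0$ of conformal modules; equivalence via a module map of middle terms compatible with identities; trivial means equivalent to the direct sum. *)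

(* Defs.v *)
(* The field of complex numbers is modelled as R[i] = complex R
   for an arbitrary real-number structure R : realType (mathcomp-analysis). *)
From HB Require Import structures.
From mathcomp Require Import all_boot all_order all_algebra.
From mathcomp Require Import reals.
From mathcomp Require Import complex.
Set Implicit Arguments. Unset Strict Implicit. Unset Printing Implicit Defensive.
Import Order.TTheory GRing.Theory Num.Theory.
Local Open Scope ring_scope.

Section HV.
Variable C : numClosedFieldType.

(* Generic notion of a conformal module over the Heisenberg–Virasoro conformal
   algebra HV, on a C-vector space E, with the action of the generator
   ∂ given by d and the λ-actions L_λ, N_λ given, for each value λ ∈ C,
   by the maps L λ, N λ : E -> E.  Since C is infinite, polynomial identities
   in λ, μ are equivalent to identities for all values λ, μ ∈ C.
   The condition "a_λ v ∈ V[λ]" is the polynomiality clause. *)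
Definition lin_map (E : lmodType C) (g : E -> E) : Prop :=
  forall (a : C) (x y : E), g (a *: x + y) = a *: g x + g y.

Definition poly_in_lambda (E : lmodType C) (A : C -> E -> E) : Prop :=
  forall x : E, exists (n : nat) (e : nat -> E),
    forall l : C, A l x = \sum_(i < n) (l ^+ i) *: e i.

Definition HV_conformal_module (E : lmodType C) (d : E -> E)
    (L N : C -> E -> E) : Prop :=
  [/\ lin_map d /\ (forall l, lin_map (L l)) /\ (forall l, lin_map (N l)),
      poly_in_lambda L /\ poly_in_lambda N,
      (* (∂a)_λ = [∂, a_λ] = -λ a_λ *)
      (forall l x, d (L l x) - L l (d x) = - l *: L l x) /\
      (forall l x, d (N l x) - N l (d x) = - l *: N l x) &
      (* [a_λ, b_μ] = [a_λ b]_{λ+μ} *)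
      [/\ forall l m x, L l (L m x) - L m (L l x) = (l - m) *: L (l + m) x,
          forall l m x, L l (N m x) - N m (L l x) = (- m) *: N (l + m) x,
          forall l m x, N l (L m x) - L m (N l x) = l *: N (l + m) x &
          forall l m x, N l (N m x) - N m (N l x) = 0]].

(* The candidate middle term E = C c_γ ⊕ C[∂] v_Δ: the element (c, p)
   stands for c·c_γ + p(∂) v_Δ. *)
Local Notation Ecar := (C^o * {poly C})%type.

Definition Ed (g : C) (x : Ecar) : Ecar := (g * x.1, 'X * x.2).

(* L_λ (p(∂) v) = p(∂+λ) ((∂ + α + Δλ) v + f(λ) c),  L_λ c = 0,
   using ∂ c = γ c. *)
Definition EL (a g D : C) (f : {poly C}) (l : C) (x : Ecar) : Ecar :=
  (x.2.[g + l] * f.[l], (x.2 \Po ('X + l%:P)) * ('X + (a + D * l)%:P)).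

(* N_λ (p(∂) v) = p(∂+λ) (β v + k(λ) c),  N_λ c = 0. *)
Definition EN (b g : C) (k : {poly C}) (l : C) (x : Ecar) : Ecar :=
  (x.2.[g + l] * k.[l], (x.2 \Po ('X + l%:P)) * b%:P).

Definition HVext (a b g D : C) (f k : {poly C}) : Prop :=
  @HV_conformal_module Ecar (Ed g) (EL a g D f) (EN b g k).

Definition HVext_equiv (a b g D : C) (f k f' k' : {poly C}) : Prop :=
  exists phi : Ecar -> Ecar,
    [/\ lin_map phi /\ (forall x, phi (Ed g x) = Ed g (phi x)),
        forall l x, phi (EL a g D f l x) = EL a g D f' l (phi x),
        forall l x, phi (EN b g k l x) = EN b g k' l (phi x),
        (forall c : C, phi (c, 0) = (c, 0)) &
        (forall x, (phi x).2 = x.2)].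

Definition HVext_trivial (a b g D : C) (f k : {poly C}) : Prop :=
  HVext_equiv a b g D f k 0 0.

End HV.

(* Main.v *)
Require Import Defs.
From HB Require Import structures.
From mathcomp Require Import all_boot all_order all_algebra.
From mathcomp Require Import reals.
From mathcomp Require Import complex.
From mathcomp Require Import ring zify.
Import Order.TTheory GRing.Theory Num.Theory.
Local Open Scope ring_scope.

Module Aux.
Set Implicit Arguments. Unset Strict Implicit.
Section S.
Variable C : numClosedFieldType.
Local Notation Ecar := (C^o * {poly C})%type.

Lemma poly_eval0 (p : {poly C}) : (forall x : C, x != 0 -> p.[x] = 0) -> p = 0.
Proof.
move=> h; apply: (@roots_geq_poly_eq0 _ p [seq i.+1%:R | i <- iota 0 (size p)]).
- apply/allP => x /mapP [i _ ->]; apply/rootP; apply: h; by rewrite pnatr_eq0.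
- rewrite map_inj_uniq ?iota_uniq // => i j /eqP; by rewrite eqr_nat => /eqP [] ->.
- by rewrite size_map size_iota.
Qed.

Lemma poly_evalP (p q : {poly C}) : (forall x : C, x != 0 -> p.[x] = q.[x]) -> p = q.
Proof.
move=> h; apply/eqP; rewrite -subr_eq0; apply/eqP/poly_eval0 => x hx.
by rewrite hornerD hornerN h // subrr.
Qed.

Definition PL (V : lmodType C) (F : C -> V) :=
  exists (n : nat) (e : nat -> V), forall l : C, F l = \sum_(i < n) l ^+ i *: e i.
Arguments PL {V}.

Lemma PL_ext (V : lmodType C) (F G : C -> V) : (forall l, F l = G l) -> PL F -> PL G.
Proof. by move=> h [n [e he]]; exists n, e => l; rewrite -h. Qed.

Lemma PL_cst (V : lmodType C) (v : V) : PL (fun _ => v).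
Proof. by exists 1%N, (fun _ => v) => l; rewrite big_ord1 expr0 scale1r. Qed.

Lemma PL_add (V : lmodType C) (F G : C -> V) : PL F -> PL G -> PL (fun l => F l + G l).
Proof.
move=> [n1 [e1 h1]] [n2 [e2 h2]].
exists (n1 + n2)%N, (fun i => (if (i < n1)%N then e1 i else 0) + (if (i < n2)%N then e2 i else 0)).
move=> l; rewrite h1 h2.
symmetry; under eq_bigr do rewrite scalerDr.
rewrite big_split /=.
rewrite (big_ord_widen (n1 + n2) (fun i => l ^+ i *: e1 i)) ?leq_addr //.
rewrite (big_ord_widen (n1 + n2) (fun i => l ^+ i *: e2 i)) ?leq_addl //.
by congr (_ + _); rewrite [RHS]big_mkcond; apply: eq_bigr => i _; case: ifP; rewrite ?scaler0.
Qed.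

Lemma PL_scale (V : lmodType C) (F : C -> V) : PL F -> PL (fun l => l *: F l).
Proof.
move=> [n [e h]]; exists n.+1, (fun i => if i is j.+1 then e j else 0) => l.
rewrite big_ord_recl /= scaler0 add0r h scaler_sumr; apply: eq_bigr => i _.
by rewrite scalerA exprS.
Qed.

Lemma PL_lin (V W : lmodType C) (h : V -> W) (F : C -> V) :
  (forall c x y, h (c *: x + y) = c *: h x + h y) -> PL F -> PL (fun l => h (F l)).
Proof.
move=> hl [n [e he]].
have h0 : h 0 = 0.
  have := hl 1 0 0; rewrite !scale1r addr0 => E.
  by apply: (addrI (h 0)); rewrite addr0 -E.
have hD : forall x y, h (x + y) = h x + h y by move=> x y; have := hl 1 x y; rewrite !scale1r.
have hZ : forall c x, h (c *: x) = c *: h x by move=> c x; rewrite -[c *: x]addr0 hl h0 addr0.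
exists n, (fun i => h (e i)) => l; rewrite he.
elim: n {he} => [|n IH]; first by rewrite !big_ord0.
by rewrite !big_ord_recr /= hD IH hZ.
Qed.

Lemma PL_horner (q : {poly C}) : PL (V := C^o) (fun l => q.[l]).
Proof.
exists (size q), (fun i => q`_i) => l; rewrite horner_coef.
by apply: eq_bigr => i _; rewrite mulrC.
Qed.

Lemma PL_bigsum (V : lmodType C) n (F : nat -> C -> V) : (forall i, PL (F i)) ->
  PL (fun l => \sum_(i < n) F i l).
Proof.
move=> h; elim: n => [|n IH].
  by apply: (@PL_ext V (fun _ => 0)); [move=> l; rewrite big_ord0 | exact: PL_cst].
by apply: (PL_ext _ (PL_add IH (h n))) => l; rewrite [RHS]big_ord_recr.
Qed.

Lemma PL_pow i : PL (V := {poly C}) (fun l => ('X + l%:P) ^+ i).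
Proof.
elim: i => [|i IH]; first exact: PL_cst.
have hl : forall (c : C) (x y : {poly C}), 'X * (c *: x + y) = c *: ('X * x) + 'X * y.
  by move=> c x y; rewrite mulrDr scalerAr.
have h1 := PL_lin (h := fun p : {poly C} => 'X * p) hl IH.
apply: (PL_ext _ (PL_add h1 (PL_scale IH))) => l /=.
by rewrite exprS mulrDl mul_polyC.
Qed.

Lemma PL_comp (p : {poly C}) : PL (V := {poly C}) (fun l => p \Po ('X + l%:P)).
Proof.
have E : forall l : C, \sum_(i < size p) p`_i *: ('X + l%:P) ^+ i = p \Po ('X + l%:P).
  by move=> l; rewrite comp_polyE.
apply: (PL_ext E).
apply: (@PL_bigsum _ (size p) (fun i l => p`_i *: ('X + l%:P) ^+ i)) => i.
apply: (PL_lin (h := fun q : {poly C} => p`_i *: q)) (PL_pow i).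
by move=> c x y; rewrite scalerDr !scalerA mulrC.
Qed.


Lemma evc (x : {poly C}) (m y : C) : (x \Po ('X + m%:P)).[y] = x.[y + m].
Proof. by rewrite horner_comp hornerD hornerX hornerC. Qed.

Lemma compc (x : {poly C}) (l m : C) :
  x \Po ('X + m%:P) \Po ('X + l%:P) = x \Po ('X + (l + m)%:P).
Proof. by rewrite -comp_polyA comp_polyD comp_polyX comp_polyC -addrA -polyCD. Qed.

Variables (a b g D : C).

Definition cLL (f : {poly C}) l m :=
  (a + g + l + D * m) * f.[l] - (a + g + m + D * l) * f.[m] - (l - m) * f.[l+m].
Definition cLN (f k : {poly C}) l m :=
  b * f.[l] - (a + g + m + D * l) * k.[m] + m * k.[l+m].
Definition cNL (f k : {poly C}) l m :=
  (a + g + l + D * m) * k.[l] - b * f.[m] - l * k.[l+m].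
Definition cNN (k : {poly C}) l m := b * k.[l] - b * k.[m].

Lemma LLfst f l m (x : Ecar) :
  (EL a g D f l (EL a g D f m x) - EL a g D f m (EL a g D f l x)
    - (l - m) *: EL a g D f (l + m) x).1 = x.2.[g + l + m] * cLL f l m.
Proof.
case: x => x1 x2; rewrite /EL /cLL /= ?hornerM !evc ?hornerD ?hornerX ?hornerC.
rewrite -[(l - m) *: _]/((l - m) * _).
have -> : g + m + l = g + l + m by ring.
have -> : g + (l + m) = g + l + m by ring.
ring.
Qed.

Lemma LLsnd f l m (x : Ecar) :
  (EL a g D f l (EL a g D f m x) - EL a g D f m (EL a g D f l x)
    - (l - m) *: EL a g D f (l + m) x).2 = 0.
Proof.
case: x => x1 x2; rewrite /EL /= !comp_polyM !compc (addrC m l).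
set B := x2 \Po _.
rewrite ?comp_polyD ?comp_polyX !comp_polyC -?mul_polyC ?polyCD ?polyCM ?polyCN ?polyCD.
ring.
Qed.


Lemma LNfst f k l m (x : Ecar) :
  (EL a g D f l (EN b g k m x) - EN b g k m (EL a g D f l x)
    - (- m) *: EN b g k (l + m) x).1 = x.2.[g + l + m] * cLN f k l m.
Proof.
case: x => x1 x2; rewrite /EL /EN /cLL /cLN /cNL /cNN /= ?hornerM !evc ?hornerD ?hornerX ?hornerC.
try rewrite -[(_ - _) *: _]/((_ - _) * _).
try rewrite -[(- _) *: _]/((- _) * _).
try rewrite -[(_ : C) *: (_ : C^o)]/(_ * _).
have -> : g + m + l = g + l + m by ring.
try (have -> : g + (l + m) = g + l + m by ring).
ring.
Qed.

Lemma LNsnd f k l m (x : Ecar) :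
  (EL a g D f l (EN b g k m x) - EN b g k m (EL a g D f l x)
    - (- m) *: EN b g k (l + m) x).2 = 0.
Proof.
case: x => x1 x2; rewrite /EL /EN /= !comp_polyM !compc (addrC m l).
set B := x2 \Po _.
rewrite ?comp_polyD ?comp_polyX !comp_polyC -?mul_polyC ?polyCD ?polyCM ?polyCN ?polyCD.
ring.
Qed.

Lemma NLfst f k l m (x : Ecar) :
  (EN b g k l (EL a g D f m x) - EL a g D f m (EN b g k l x)
    - l *: EN b g k (l + m) x).1 = x.2.[g + l + m] * cNL f k l m.
Proof.
case: x => x1 x2; rewrite /EL /EN /cLL /cLN /cNL /cNN /= ?hornerM !evc ?hornerD ?hornerX ?hornerC.
try rewrite -[(_ - _) *: _]/((_ - _) * _).
try rewrite -[(- _) *: _]/((- _) * _).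
try rewrite -[(_ : C) *: (_ : C^o)]/(_ * _).
have -> : g + m + l = g + l + m by ring.
try (have -> : g + (l + m) = g + l + m by ring).
ring.
Qed.

Lemma NLsnd f k l m (x : Ecar) :
  (EN b g k l (EL a g D f m x) - EL a g D f m (EN b g k l x)
    - l *: EN b g k (l + m) x).2 = 0.
Proof.
case: x => x1 x2; rewrite /EL /EN /= !comp_polyM !compc (addrC m l).
set B := x2 \Po _.
rewrite ?comp_polyD ?comp_polyX !comp_polyC -?mul_polyC ?polyCD ?polyCM ?polyCN ?polyCD.
ring.
Qed.

Lemma NNfst k l m (x : Ecar) :
  (EN b g k l (EN b g k m x) - EN b g k m (EN b g k l x)).1 = x.2.[g + l + m] * cNN k l m.
Proof.
case: x => x1 x2; rewrite /EL /EN /cLL /cLN /cNL /cNN /= ?hornerM !evc ?hornerD ?hornerX ?hornerC.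
try rewrite -[(_ - _) *: _]/((_ - _) * _).
try rewrite -[(- _) *: _]/((- _) * _).
try rewrite -[(_ : C) *: (_ : C^o)]/(_ * _).
have -> : g + m + l = g + l + m by ring.
try (have -> : g + (l + m) = g + l + m by ring).
ring.
Qed.

Lemma NNsnd k l m (x : Ecar) :
  (EN b g k l (EN b g k m x) - EN b g k m (EN b g k l x)).2 = 0.
Proof.
case: x => x1 x2; rewrite /EL /EN /= !comp_polyM !compc (addrC m l).
set B := x2 \Po _.
rewrite ?comp_polyD ?comp_polyX !comp_polyC -?mul_polyC ?polyCD ?polyCM ?polyCN ?polyCD.
ring.
Qed.


Definition cocyc f k := [/\ forall l m, cLL f l m = 0, forall l m, cLN f k l m = 0,
  forall l m, cNL f k l m = 0 & forall l m, cNN k l m = 0].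

Lemma PL_pair (F1 : C -> C^o) (F2 : C -> {poly C}) : PL F1 -> PL F2 ->
  PL (V := Ecar) (fun l => (F1 l, F2 l)).
Proof.
move=> H1 H2.
have l1 : forall (c : C) (x y : C^o), ((c *: x + y, 0) : Ecar) = c *: (x, 0) + (y, 0).
  by move=> c x y; transitivity ((c *: x + y, c *: (0 : {poly C}) + 0) : Ecar); first by rewrite scaler0 addr0.
have l2 : forall (c : C) (x y : {poly C}), (((0 : C^o), c *: x + y) : Ecar) = c *: (0, x) + (0, y).
  by move=> c x y; transitivity (((c *: (0 : C^o) + 0), c *: x + y) : Ecar); first by rewrite scaler0 addr0.
have hA := PL_lin l1 H1; have hB := PL_lin l2 H2.
by apply: (PL_ext _ (PL_add hA hB)) => l; transitivity ((F1 l + 0, 0 + F2 l) : Ecar); last rewrite addr0 add0r.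
Qed.

Lemma PL_EL f (x : Ecar) : PL (fun l => EL a g D f l x).
Proof.
case: x => x1 x2; rewrite /EL /=.
apply: PL_pair.
  apply: (PL_ext _ (PL_horner ((x2 \Po ('X + g%:P)) * f))) => l.
  by rewrite hornerM evc addrC.
have lA : forall (c : C) (x y : {poly C}), (c *: x + y) * ('X + a%:P) = c *: (x * ('X + a%:P)) + y * ('X + a%:P).
  by move=> c x y; rewrite mulrDl scalerAl.
have lB : forall (c : C) (x y : {poly C}), (c *: x + y) * D%:P = c *: (x * D%:P) + y * D%:P.
  by move=> c x y; rewrite mulrDl scalerAl.
have := PL_add (PL_lin lA (PL_comp x2)) (PL_scale (PL_lin lB (PL_comp x2))).
apply: PL_ext => l /=.
by rewrite -mul_polyC polyCD polyCM; ring.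
Qed.

Lemma PL_EN k (x : Ecar) : PL (fun l => EN b g k l x).
Proof.
case: x => x1 x2; rewrite /EN /=.
apply: PL_pair.
  apply: (PL_ext _ (PL_horner ((x2 \Po ('X + g%:P)) * k))) => l.
  by rewrite hornerM evc addrC.
have lB : forall (c : C) (x y : {poly C}), (c *: x + y) * b%:P = c *: (x * b%:P) + y * b%:P.
  by move=> c x y; rewrite mulrDl scalerAl.
exact: (PL_lin lB (PL_comp x2)).
Qed.

Lemma HVext_iff f k : HVext a b g D f k <-> cocyc f k.
Proof.
split.
  case=> _ _ _ [HLL HLN HNL HNN]; split=> l m.
  - have := LLfst f l m (0, 1%:P); rewrite (HLL l m) subrr /= hornerC mul1r.
    by move/esym.
  - have := LNfst f k l m (0, 1%:P); rewrite (HLN l m) subrr /= hornerC mul1r.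
    by move/esym.
  - have := NLfst f k l m (0, 1%:P); rewrite (HNL l m) subrr /= hornerC mul1r.
    by move/esym.
  - have := NNfst k l m (0, 1%:P); rewrite (HNN l m) /= hornerC mul1r.
    by move/esym.
case=> HLL HLN HNL HNN; split.
- split; [|split].
  + move=> c [x1 x2] [y1 y2]; rewrite /Ed /=; congr pair.
      by change (g * (c * x1 + y1) = c * (g * x1) + g * y1); ring.
    by change ('X * (c *: x2 + y2) = c *: ('X * x2) + 'X * y2); rewrite mulrDr scalerAr.
  + move=> l c [x1 x2] [y1 y2]; rewrite /EL /=; congr pair.
      change ((c *: x2 + y2).[g + l] * f.[l] = c * (x2.[g + l] * f.[l]) + y2.[g + l] * f.[l]).
      by rewrite hornerD hornerZ; ring.
    change (((c *: x2 + y2) \Po ('X + l%:P)) * ('X + (a + D * l)%:P) =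
      c *: ((x2 \Po ('X + l%:P)) * ('X + (a + D * l)%:P)) + (y2 \Po ('X + l%:P)) * ('X + (a + D * l)%:P)).
    by rewrite comp_polyD comp_polyZ mulrDl scalerAl.
  + move=> l c [x1 x2] [y1 y2]; rewrite /EN /=; congr pair.
      change ((c *: x2 + y2).[g + l] * k.[l] = c * (x2.[g + l] * k.[l]) + y2.[g + l] * k.[l]).
      by rewrite hornerD hornerZ; ring.
    change (((c *: x2 + y2) \Po ('X + l%:P)) * b%:P =
      c *: ((x2 \Po ('X + l%:P)) * b%:P) + (y2 \Po ('X + l%:P)) * b%:P).
    by rewrite comp_polyD comp_polyZ mulrDl scalerAl.
- by split=> x; [apply: PL_EL | apply: PL_EN].
- split=> l [x1 x2]; rewrite /Ed /EL /EN /=; congr pair.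
  + change (g * (x2.[g + l] * f.[l]) - ('X * x2).[g + l] * f.[l] = - l * (x2.[g + l] * f.[l])).
    by rewrite hornerM hornerX; ring.
  + change ('X * ((x2 \Po ('X + l%:P)) * ('X + (a + D * l)%:P)) - (('X * x2) \Po ('X + l%:P)) * ('X + (a + D * l)%:P)
      = - l *: ((x2 \Po ('X + l%:P)) * ('X + (a + D * l)%:P))).
    by rewrite comp_polyM comp_polyX -mul_polyC polyCN; ring.
  + change (g * (x2.[g + l] * k.[l]) - ('X * x2).[g + l] * k.[l] = - l * (x2.[g + l] * k.[l])).
    by rewrite hornerM hornerX; ring.
  + change ('X * ((x2 \Po ('X + l%:P)) * b%:P) - (('X * x2) \Po ('X + l%:P)) * b%:P
      = - l *: ((x2 \Po ('X + l%:P)) * b%:P)).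
    by rewrite comp_polyM comp_polyX -mul_polyC polyCN; ring.
- split=> l m x; apply/eqP; rewrite -subr_eq0; apply/eqP.
  + by rewrite [LHS]surjective_pairing LLfst LLsnd HLL mulr0.
  + by rewrite [LHS]surjective_pairing LNfst LNsnd HLN mulr0.
  + by rewrite [LHS]surjective_pairing NLfst NLsnd HNL mulr0.
  + by rewrite subr0 [LHS]surjective_pairing NNfst NNsnd HNN mulr0.
Qed.


Lemma fstZ (c : C) (u : C^o) (p : {poly C}) : (c *: ((u, p) : Ecar)).1 = c * u.
Proof. by []. Qed.
Lemma fstD (x y : Ecar) : (x + y).1 = x.1 + y.1.
Proof. by []. Qed.

Lemma equivP f k f' k' : HVext_equiv a b g D f k f' k' <->
  exists c, f' = f + c *: (D *: 'X + (a + g)%:P) /\ k' = k + (c * b)%:P.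
Proof.
split.
  case=> phi [[hlin hd] hL hN hc h2].
  have hD : forall x y, phi (x + y) = phi x + phi y.
    by move=> x y; have := hlin 1 x y; rewrite !scale1r.
  have h0 : phi 0 = 0 by exact: (hc 0).
  have hZ : forall c x, phi (c *: x) = c *: phi x.
    by move=> c x; have := hlin c x 0; rewrite addr0 h0 addr0.
  set h1 := (phi (0, 1%:P)).1.
  have p1 : phi (0, 1%:P) = (h1, 1%:P) by rewrite [LHS]surjective_pairing h2.
  have pX : phi (0, 'X) = (g * h1, 'X).
    have E : Ed g (0, 1%:P) = (0, 'X) by rewrite /Ed /= mulr0 polyC1 mulr1.
    by rewrite -E hd p1 /Ed /= polyC1 mulr1.
  have dec1 : forall (u c : C), ((u, 'X + c%:P) : Ecar) = ((u, 0) : Ecar) + ((0, 'X) : Ecar) + c *: ((0, 1%:P) : Ecar).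
    move=> u c; transitivity ((u + 0 + c * 0, 0 + 'X + c *: 1%:P) : Ecar); last by [].
    by rewrite mulr0 !addr0 add0r -mul_polyC mulr1.
  have dec2 : forall (u c : C), ((u, c%:P) : Ecar) = ((u, 0) : Ecar) + c *: ((0, 1%:P) : Ecar).
    move=> u c; transitivity ((u + c * 0, 0 + c *: 1%:P) : Ecar); last by [].
    by rewrite mulr0 !addr0 add0r -mul_polyC mulr1.
  exists h1; split.
    apply: poly_evalP => l _.
    have := congr1 fst (hL l (0, 1%:P)).
    rewrite /EL /= hornerC mul1r comp_polyC mul1r dec1 !hD hZ hc pX p1.
    rewrite !fstD fstZ /= hornerC mul1r => <-.
    by rewrite hornerD hornerZ hornerD hornerZ hornerX hornerC; ring.
  apply: poly_evalP => l _.
  have := congr1 fst (hN l (0, 1%:P)).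
  rewrite /EN /= hornerC mul1r comp_polyC mul1r dec2 !hD hZ hc p1.
  rewrite !fstD fstZ /= hornerC mul1r => <-.
  by rewrite hornerD hornerC mulrC.
case=> c [-> ->].
exists (fun x : Ecar => ((x.1 + c * x.2.[g] : C^o), x.2) : Ecar); split.
- split.
    move=> c0 [x1 x2] [y1 y2].
    change ((c0 * x1 + y1 + c * (c0 *: x2 + y2).[g], c0 *: x2 + y2) =
      ((c0 * (x1 + c * x2.[g]) + (y1 + c * y2.[g]) : C^o), c0 *: x2 + y2) :> Ecar).
    by congr pair; rewrite hornerD hornerZ; ring.
  by move=> [x1 x2]; rewrite /Ed /=; congr pair; rewrite hornerM hornerX; ring.
- move=> l [x1 x2]; rewrite /EL /=; congr pair.
  rewrite !hornerM evc !hornerD !hornerZ !hornerX !hornerC hornerD hornerZ hornerX hornerC; ring.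
- move=> l [x1 x2]; rewrite /EN /=; congr pair.
  rewrite !hornerM evc !hornerD !hornerC; ring.
- by move=> c0 /=; rewrite horner0 mulr0 addr0.
- by [].
Qed.


Lemma eq_from (x y z : C) : z = 0 -> x - y = z -> x = y.
Proof. by move=> -> /eqP; rewrite subr_eq0 => /eqP. Qed.

Lemma eq_from' (x y z : C) : z = 0 -> y - x = z -> x = y.
Proof. by move=> -> /eqP; rewrite subr_eq0 => /eqP. Qed.

Lemma k_form f k : b = 0 -> D != 0 -> cocyc f k ->
  exists kap, k = kap *: 'X /\ (kap != 0 -> a + g = 0 /\ D = 1).
Proof.
move=> hb hD [_ HLN _ _].
have E : forall l m, (a + g + m + D * l) * k.[m] = m * k.[l + m].
  move=> l m; apply: (eq_from' (HLN l m)); rewrite /cLN hb; ring.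
have k0 : k.[0] = 0.
  have := E ((1 - (a + g)) / D) 0.
  have -> : a + g + 0 + D * ((1 - (a + g)) / D) = 1 by field.
  by rewrite mul1r mul0r.
have e1 : forall l, k.[l] = (a + g + 1 + D * (l - 1)) * k.[1].
  by move=> l; have := E (l - 1) 1; rewrite mul1r subrK => ->.
have c0 : (a + g + 1 - D) * k.[1] = 0.
  by have := e1 0; rewrite k0 sub0r mulrN1 => ->.
have kl : forall l, k.[l] = D * k.[1] * l.
  move=> l; rewrite e1; apply: (eq_from c0); ring.
exists (D * k.[1]); split.
  by apply: poly_evalP => l _; rewrite kl hornerZ hornerX.
move=> hk.
have k1 : k.[1] != 0 by apply: contraNneq hk => ->; rewrite mulr0.
have s0 : a + g = 0.
  have h : (a + g) * k.[1] = 0.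
    have := E 0 1; rewrite mulr0 addr0 add0r mul1r => h.
    by rewrite -[RHS](subrr k.[1]) -{2}h; ring.
  by move: h => /eqP; rewrite mulf_eq0 (negbTE k1) orbF => /eqP.
split=> //.
move: c0; rewrite s0 add0r => /eqP; rewrite mulf_eq0 (negbTE k1) orbF subr_eq0.
by move=> /eqP.
Qed.

Lemma f_form0 f k : cocyc f k -> a + g != 0 ->
  f = (f.[0] / (a + g)) *: (D *: 'X + (a + g)%:P).
Proof.
move=> [HLL _ _ _] hs; apply: poly_evalP => l _.
have H0 := HLL l 0.
rewrite hornerZ hornerD hornerZ hornerX hornerC.
apply: (mulfI hs); rewrite mulrA mulrCA divff // mulr1.
apply: (eq_from H0); rewrite /cLL !mulr0 !addr0 subr0; ring.
Qed.

Lemma coefX1n n j : (('X + 1%:P) ^+ n : {poly C})`_j = ('C(n, j))%:R.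
Proof.
elim: n j => [|n IH] j.
  by rewrite expr0 coef1 bin0n.
rewrite exprSr mulrDr coefD coefMX coefMC !IH mulr1.
case: j => [|j] /=; first by rewrite !bin0 add0r.
by rewrite binS natrD addrC.
Qed.

Definition GP (i : nat) : {poly C} :=
  (1%:P + D *: 'X) - ('X + D%:P) * 'X^i - (1%:P - 'X) * ('X + 1%:P) ^+ i.

Lemma GPev i t : (GP i).[t] = 1 + D * t - (t + D) * t ^+ i - (1 - t) * (t + 1) ^+ i.
Proof.
by rewrite /GP !(hornerD, hornerN, hornerM, horner_exp, hornerZ, hornerXn, hornerX, hornerC).
Qed.


Lemma fG f k : cocyc f k -> a + g = 0 -> forall t i, f`_i * (GP i).[t] = 0.
Proof.
move=> [HLL _ _ _] hs t i.
pose n := size f.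
pose Q := \poly_(j < n) (f`_j * (GP j).[t]).
have HQ : Q = 0.
  apply: poly_eval0 => l hl.
  have key : l * Q.[l] = cLL f l (t * l).
    rewrite /cLL hs (horner_coef_wide _ (size_poly _ _)).
    have -> : l + t * l = (t + 1) * l by ring.
    rewrite !horner_coef -/n !mulr_sumr -!sumrB.
    apply: eq_bigr => j _; rewrite coef_poly ltn_ord GPev !exprMn; ring.
  have : l * Q.[l] = 0 by rewrite key HLL.
  by move/eqP; rewrite mulf_eq0 (negbTE hl) => /eqP.
case: (ltnP i n) => hi.
  by have := congr1 (fun p : {poly C} => p`_i) HQ; rewrite /= coef_poly hi coef0.
by rewrite nth_default // mul0r.
Qed.

Lemma f_form f k : cocyc f k -> a + g = 0 -> D != 0 -> forall i, f`_i != 0 ->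
  i = 1%N \/ (i = 2%N /\ D = 1) \/ (i = 3%N /\ D = 2).
Proof.
move=> hc hs hD i hi.
have hG : forall t, (GP i).[t] = 0.
  by move=> t; have /eqP := fG hc hs t i; rewrite mulf_eq0 (negbTE hi) => /eqP.
case: i hi hG => [|[|[|[|i]]]] hi hG.
- exfalso; have : - D = 0 by rewrite -(hG 0) GPev; ring.
  by move/eqP; rewrite oppr_eq0 (negbTE hD).
- by left.
- right; left; split=> //.
  have : 2 * (1 - D) = 0 by rewrite -(hG 2) GPev; ring.
  by move/eqP; rewrite mulf_eq0 pnatr_eq0 /= subr_eq0 => /eqP <-.
- right; right; split=> //.
  have : 6 * (2 - D) = 0 by rewrite -(hG 2) GPev; ring.
  by move/eqP; rewrite mulf_eq0 pnatr_eq0 /= subr_eq0 => /eqP <-.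
exfalso.
have HP : GP i.+4 = 0 by apply: poly_eval0 => t _; exact: hG t.
have := congr1 (fun p : {poly C} => p`_2) HP.
rewrite /GP /= coef0 mulrBl !coefB coefD coefC coefZ coefX coefMXn /= coefCM coefXM /= !coefX1n.
rewrite mulr0 !subr0 add0r mul1r sub0r => /eqP; rewrite oppr_eq0 subr_eq0 eqr_nat.
rewrite !binS !bin1 !bin0 => /eqP; lia.
Qed.


Lemma triv_iff f k : HVext_trivial a b g D f k <->
  exists c, f = c *: (D *: 'X + (a + g)%:P) /\ k = (c * b)%:P.
Proof.
rewrite /HVext_trivial equivP; split=> [[c [h1 h2]]|[c [-> ->]]]; exists (- c).
  split.
    by rewrite scaleNr; apply/eqP; rewrite -addr_eq0 -h1.
  by rewrite mulNr polyCN; apply/eqP; rewrite -addr_eq0 -h2.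
by rewrite scaleNr subrr mulNr polyCN subrr.
Qed.

Lemma two_neq1 : (2 : C) != 1.
Proof. by rewrite pnatr_eq1. Qed.

Lemma class_triv f k : (D, b) != (0, 0) -> cocyc f k ->
  ~ [/\ a + g = 0, b = 0 & (D = 1 \/ D = 2)] ->
  exists c, f = c *: (D *: 'X + (a + g)%:P) /\ k = (c * b)%:P.
Proof.
move=> hDb hc hn.
have [hb|hb] := eqVneq b 0; last first.
  case: hc => _ HLN _ HNN.
  have kc : forall l, k.[l] = k.[0].
    move=> l; have /eqP := HNN l 0; rewrite /cNN -mulrBr mulf_eq0 (negbTE hb) /=.
    by rewrite subr_eq0 => /eqP.
  exists (k.[0] / b); split.
    apply: poly_evalP => l _; rewrite hornerZ hornerD hornerZ hornerX hornerC.
    apply: (mulfI hb); rewrite mulrA mulrCA divff // mulr1.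
    apply: (eq_from (HLN l 0)); rewrite /cLN !mul0r addr0 addr0; ring.
  rewrite divfK //; apply: poly_evalP => l _; by rewrite hornerC kc.
have hD : D != 0 by move: hDb; rewrite hb xpair_eqE eqxx andbT.
have [kap [hk hkap]] := k_form hb hD hc.
have [hs|hs] := eqVneq (a + g) 0; last first.
  have kap0 : kap = 0 by apply/eqP; apply: contraNT hs => /hkap [-> _].
  exists (f.[0] / (a + g)); split; first exact: (f_form0 hc hs).
  by rewrite hk kap0 scale0r hb mulr0.
have hD12 : D != 1 /\ D != 2.
  by split; apply/negP => /eqP hD'; apply: hn; split => //; [left | right].
have kap0 : kap = 0.
  by apply/eqP; apply: contraNT hD12.1 => /hkap [_ ->].
exists (f`_1 / D); split; last by rewrite hk kap0 scale0r hb mulr0.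
rewrite hs polyC0 addr0 scalerA divfK //.
apply/polyP => i; rewrite coefZ coefX.
have [->|hi] := eqVneq i 1%N; first by rewrite mulr1.
rewrite mulr0; apply/eqP; apply: contraT => hfi.
case: (f_form hc hs hD hfi) => [hi'|[[_ hD']|[_ hD']]].
- by rewrite hi' eqxx in hi.
- by move: hD12.1; rewrite hD' eqxx.
- by move: hD12.2; rewrite hD' eqxx.
Qed.

Lemma class1 f k : a + g = 0 -> b = 0 -> D = 1 -> cocyc f k ->
  f = f`_1 *: 'X + f`_2 *: 'X^2 /\ k = k`_1 *: 'X.
Proof.
move=> hs hb hD1 hc.
have hD : D != 0 by rewrite hD1 oner_eq0.
have [kap [hk _]] := k_form hb hD hc.
split; last by rewrite hk coefZ coefX mulr1.
apply/polyP => i; rewrite coefD !coefZ coefX coefXn.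
have [->|h1] := eqVneq i 1%N; first by rewrite mulr1 mulr0 addr0.
have [->|h2] := eqVneq i 2%N; first by rewrite mulr1 mulr0 add0r.
rewrite !mulr0 addr0; apply/eqP; apply: contraT => hfi.
case: (f_form hc hs hD hfi) => [hi|[[hi _]|[_ hD2]]].
- by rewrite hi eqxx in h1.
- by rewrite hi eqxx in h2.
- by move: two_neq1; rewrite -hD2 hD1 eqxx.
Qed.

Lemma class2 f k : a + g = 0 -> b = 0 -> D = 2 -> cocyc f k ->
  f = f`_1 *: 'X + f`_3 *: 'X^3 /\ k = 0.
Proof.
move=> hs hb hD2 hc.
have hD : D != 0 by rewrite hD2 pnatr_eq0.
have [kap [hk hkap]] := k_form hb hD hc.
split; last first.
  have kap0 : kap = 0.
    by apply/eqP; apply: contraT => /hkap [_]; rewrite hD2 => /eqP; rewrite (negbTE two_neq1).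
  by rewrite hk kap0 scale0r.
apply/polyP => i; rewrite coefD !coefZ coefX coefXn.
have [->|h1] := eqVneq i 1%N; first by rewrite mulr1 mulr0 addr0.
have [->|h3] := eqVneq i 3%N; first by rewrite mulr1 mulr0 add0r.
rewrite !mulr0 addr0; apply/eqP; apply: contraT => hfi.
case: (f_form hc hs hD hfi) => [hi|[[_ hD1]|[hi _]]].
- by rewrite hi eqxx in h1.
- by move: two_neq1; rewrite -hD2 hD1 eqxx.
- by rewrite hi eqxx in h3.
Qed.


Lemma part3 : a + g = 0 -> b = 0 -> D = 1 ->
        [/\ forall k1 f2 : C, (k1, f2) != (0, 0) ->
              HVext a b g D (f2 *: 'X^2) (k1 *: 'X)
              /\ ~ HVext_trivial a b g D (f2 *: 'X^2) (k1 *: 'X),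
            forall f k : {poly C}, HVext a b g D f k -> ~ HVext_trivial a b g D f k ->
              exists k1 f2 : C, (k1, f2) != (0, 0) /\
                HVext_equiv a b g D f k (f2 *: 'X^2) (k1 *: 'X) &
            forall k1 f2 k1' f2' : C,
              HVext_equiv a b g D (f2 *: 'X^2) (k1 *: 'X) (f2' *: 'X^2) (k1' *: 'X) ->
              k1 = k1' /\ f2 = f2'].
Proof.
move=> hs hb hD1; split.
- move=> k1 f2 hne; split.
    apply/HVext_iff; split=> l m; rewrite /cLL /cLN /cNL /cNN ?hs ?hb ?hD1;
      rewrite !(hornerZ, hornerXn, hornerX); ring.
  move/triv_iff => [c [h1 h2]]; move: hne; rewrite xpair_eqE.
  have := congr1 (fun p : {poly C} => p`_2) h1.
  rewrite /= !coefZ coefD coefZ coefX coefXn coefC /= mulr1 mulr0 addr0 mulr0 => ->.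
  have := congr1 (fun p : {poly C} => p`_1) h2.
  by rewrite /= coefZ coefX coefC /= mulr1 => ->; rewrite eqxx.
- move=> f k /HVext_iff hc hnt.
  have [hf hk] := class1 hs hb hD1 hc.
  exists k`_1, f`_2; split.
    rewrite xpair_eqE; apply/negP => /andP [/eqP h1 /eqP h2]; apply: hnt.
    apply/triv_iff; exists f`_1; split.
      by rewrite {1}hf h2 scale0r addr0 hD1 hs scale1r polyC0 addr0.
    by rewrite {1}hk h1 scale0r hb mulr0.
  apply/equivP; exists (- f`_1); split.
    by rewrite {2}hf hD1 hs scale1r polyC0 addr0 scaleNr addrAC subrr add0r.
  by rewrite hb mulr0 polyC0 addr0 [k in RHS]hk.
- move=> k1 f2 k1' f2' /equivP [c [h1 h2]].
  rewrite hs hD1 scale1r polyC0 addr0 in h1; rewrite hb mulr0 polyC0 addr0 in h2.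
  have := congr1 (fun p : {poly C} => p`_1) h1.
  rewrite /= coefD !coefZ coefX !coefXn /= !mulr0 add0r mulr1 => /esym c0.
  move: h1; rewrite c0 scale0r addr0 => h1.
  have e2 := congr1 (fun p : {poly C} => p`_2) h1; rewrite /= !coefZ coefXn /= !mulr1 in e2.
  have e1 := congr1 (fun p : {poly C} => p`_1) h2; rewrite /= !coefZ coefX /= !mulr1 in e1.
  by rewrite e1 e2.
Qed.

Lemma part4 : a + g = 0 -> b = 0 -> D = 2 ->
        [/\ forall f3 : C, f3 != 0 ->
              HVext a b g D (f3 *: 'X^3) 0 /\ ~ HVext_trivial a b g D (f3 *: 'X^3) 0,
            forall f k : {poly C}, HVext a b g D f k -> ~ HVext_trivial a b g D f k ->
              exists f3 : C, f3 != 0 /\ HVext_equiv a b g D f k (f3 *: 'X^3) 0 &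
            forall f3 f3' : C,
              HVext_equiv a b g D (f3 *: 'X^3) 0 (f3' *: 'X^3) 0 -> f3 = f3'].
Proof.
move=> hs hb hD2; split.
- move=> f3 hne; split.
    apply/HVext_iff; split=> l m; rewrite /cLL /cLN /cNL /cNN ?hs ?hb ?hD2;
      rewrite !(hornerZ, hornerXn, hornerX, horner0); ring.
  move/triv_iff => [c [h1 h2]]; move: hne.
  have := congr1 (fun p : {poly C} => p`_3) h1.
  by rewrite /= !coefZ coefD coefZ coefX coefXn coefC /= mulr1 mulr0 addr0 mulr0 => ->; rewrite eqxx.
- move=> f k /HVext_iff hc hnt.
  have [hf hk] := class2 hs hb hD2 hc.
  exists f`_3; split.
    apply/negP => /eqP h3; apply: hnt.
    apply/triv_iff; exists (f`_1 / 2); split.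
      rewrite {1}hf h3 scale0r addr0 hD2 hs polyC0 addr0 scalerA divfK //.
      by rewrite pnatr_eq0.
    by rewrite {1}hk hb mulr0 polyC0.
  apply/equivP; exists (- (f`_1 / 2)); split.
    rewrite {2}hf hD2 hs polyC0 addr0 scaleNr scalerA divfK ?pnatr_eq0 //.
    by rewrite addrAC subrr add0r.
  by rewrite hb mulr0 polyC0 addr0 [k in RHS]hk.
- move=> f3 f3' /equivP [c [h1 h2]].
  rewrite hs hD2 polyC0 addr0 in h1.
  have := congr1 (fun p : {poly C} => p`_1) h1.
  rewrite /= coefD !coefZ coefX !coefXn /= !mulr0 add0r mulr1 => /esym /eqP.
  rewrite mulf_eq0 pnatr_eq0 orbF => /eqP c0.
  move: h1; rewrite c0 scale0r addr0 => h1.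
  have e3 := congr1 (fun p : {poly C} => p`_3) h1; rewrite /= !coefZ coefXn /= !mulr1 in e3.
  by rewrite e3.
Qed.

End S.

End Aux.
Import Aux.

Local Open Scope complex_scope.

Theorem corollary6p1 (R : realType) (a b g D : R[i]) (hDb : (D, b) != (0, 0)) :
  [/\ (exists f k : {poly R[i]}, HVext a b g D f k /\ ~ HVext_trivial a b g D f k)
        <-> [/\ a + g = 0, b = 0 & (D = 1 \/ D = 2)],
      (forall f k : {poly R[i]}, HVext_trivial a b g D f k <->
         exists c : R[i], f = c *: (D *: 'X + (a + g)%:P) /\ k = (c * b)%:P),
      (a + g = 0 -> b = 0 -> D = 1 ->
        [/\ forall k1 f2 : R[i], (k1, f2) != (0, 0) ->
              HVext a b g D (f2 *: 'X^2) (k1 *: 'X)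
              /\ ~ HVext_trivial a b g D (f2 *: 'X^2) (k1 *: 'X),
            forall f k : {poly R[i]}, HVext a b g D f k -> ~ HVext_trivial a b g D f k ->
              exists k1 f2 : R[i], (k1, f2) != (0, 0) /\
                HVext_equiv a b g D f k (f2 *: 'X^2) (k1 *: 'X) &
            forall k1 f2 k1' f2' : R[i],
              HVext_equiv a b g D (f2 *: 'X^2) (k1 *: 'X) (f2' *: 'X^2) (k1' *: 'X) ->
              k1 = k1' /\ f2 = f2']) &
      (a + g = 0 -> b = 0 -> D = 2 ->
        [/\ forall f3 : R[i], f3 != 0 ->
              HVext a b g D (f3 *: 'X^3) 0 /\ ~ HVext_trivial a b g D (f3 *: 'X^3) 0,
            forall f k : {poly R[i]}, HVext a b g D f k -> ~ HVext_trivial a b g D f k ->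
              exists f3 : R[i], f3 != 0 /\ HVext_equiv a b g D f k (f3 *: 'X^3) 0 &
            forall f3 f3' : R[i],
              HVext_equiv a b g D (f3 *: 'X^3) 0 (f3' *: 'X^3) 0 -> f3 = f3'])].
Proof.
split.
- split.
  + move=> [f [k [hE hnt]]].
    have hc := (@HVext_iff _ a b g D f k).1 hE.
    case E: [&& a + g == 0, b == 0 & (D == 1) || (D == 2)].
      by move/and3P: E => [/eqP -> /eqP -> /orP [/eqP ->|/eqP ->]]; split=> //; [left|right].
    exfalso; apply: hnt; apply/(@triv_iff _ a b g D).
    apply: (@class_triv _ a b g D f k hDb hc) => -[h1 h2 h3].
    move: E; rewrite h1 h2 !eqxx /=.
    by case: h3 => ->; rewrite eqxx ?orbT.
  + move=> [hs hb [hD1|hD2]].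
      have [P1 _ _] := @part3 _ a b g D hs hb hD1.
      exists (1 *: 'X^2), (0 *: 'X); apply: P1.
      by rewrite xpair_eqE eqxx oner_eq0.
    have [P1 _ _] := @part4 _ a b g D hs hb hD2.
    by exists (1 *: 'X^3), 0; apply: P1; exact: oner_neq0.
- by move=> f k; exact: (@triv_iff _ a b g D).
- exact: (@part3 _ a b g D).
- exact: (@part4 _ a b g D).
Qed.
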